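(* Let $f:\mathbb{X}(N,k)\to\mathbb{R}$ be a monotone $k$-submodular function, let $\hat{\mathbf{x}}\in\mathcal{X}$, and let $\hat{\mathbf{S}}=(\hat S_1,\dots,\hat S_k)$ be an optimal solution of the defender's problem defining $\Phi_D(\hat{\mathbf{x}})$, so $\Phi_D(\hat{\mathbf{x}})=f(\hat{\mathbf{S}})$. For each $q$ fix an arbitrary ordering $\hat S_q=\{i_{q,1},\dots,i_{q,T_q}\}$ and for $1\le t\le T_q$ let $\hat{\mathbf{S}}_{q,(t)}=(\hat S_1,\dots,\hat S_{q-1},\{i_{q,1},\dots,i_{q,t-1}\},\emptyset,\dots,\emptyset)$ (the $q$-th component is empty when $t=1$). Then for every $\mathbf{x}\in\mathcal{X}$, $$\Phi_D(\mathbf{x})\;\ge\;\Phi_D(\hat{\mathbf{x}})-\sum_{q=1}^k\sum_{t=1}^{T_q}\rho_{q,i_{q,t}}(\hat{\mathbf{S}}_{q,(t)})\,x_{q,i_{q,t}},$$ and moreover the right-hand side of this inequality is at least $\Phi_D(\hat{\mathbf{x}})-\sum_{q=1}^k\sum_{i\in\hat S_q}\rho_{q,i}(\boldsymbol{\emptyset})\,x_{q,i}$ for every $\mathbf{x}\in\mathcal{X}$.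
   Context: Let $n,k$ be positive integers and $N=\{1,\dots,n\}$. $\mathbb{X}(N,k)$ denotes the set of $k$-tuples $\mathbf{S}=(S_1,\dots,S_k)$ of pairwise disjoint subsets of $N$; such a tuple is identified with $\mathbf{s}\in\{0,1\}^{kn}$ where $s_{q,i}=1$ iff $i\in S_q$. For $\mathbf{X},\mathbf{Y}\in\mathbb{X}(N,k)$ let $\mathbf{X}\sqcap\mathbf{Y}=(X_1\cap Y_1,\dots,X_k\cap Y_k)$ and $\mathbf{X}\sqcup\mathbf{Y}$ be the tuple whose $i$-th component is $(X_i\cup Y_i)\setminus\bigcup_{q\ne i}(X_q\cup Y_q)$. A function $f:\mathbb{X}(N,k)\to\mathbb{R}$ is $k$-submodular if $f(\mathbf{X})+f(\mathbf{Y})\ge f(\mathbf{X}\sqcap\mathbf{Y})+f(\mathbf{X}\sqcup\mathbf{Y})$ for all $\mathbf{X},\mathbf{Y}$, and monotone if $f(\mathbf{X})\le f(\mathbf{Y})$ whenever $X_q\subseteq Y_q$ for all $q$. $\boldsymbol{\emptyset}=(\emptyset,\dots,\emptyset)$. For $\mathbf{X}\in\mathbb{X}(N,k)$, $q\in\{1,\dots,k\}$ and $i\in N\setminus\bigcup_r X_r$, the marginal gain is $\rho_{q,i}(\mathbf{X})=f(X_1,\dots,X_{q-1},X_q\cup\{i\},X_{q+1},\dots,X_k)-f(\mathbf{X})$. Given nonnegative integer budgets $A_1,\dots,A_k$ and $D_1,\dots,D_k$, the attacker's feasible set is $\mathcal{X}=\{\mathbf{x}\in\{0,1\}^{kn}:\sum_{i=1}^n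 x_{q,i}\le A_q\ \forall q,\ \sum_{q=1}^k x_{q,i}\le 1\ \forall i\in N\}$, and $\Phi_D(\mathbf{x})=\max\{f(\mathbf{S}):\mathbf{S}\in\mathbb{X}(N,k),\ s_{q,i}\le 1-x_{q,i}\ \forall q,i,\ \sum_{i=1}^n s_{q,i}\le D_q\ \forall q\}$. *)

(* Defs.v *)
From mathcomp Require Import all_boot all_order all_algebra.
Set Implicit Arguments. Unset Strict Implicit. Unset Printing Implicit Defensive.
Import Order.TTheory GRing.Theory Num.Theory.
Local Open Scope ring_scope.

Definition kset (n k : nat) := {ffun 'I_k -> {set 'I_n}}.

Section Defs.
Variables (n k : nat) (R : realFieldType).

Definition disj (X : kset n k) : bool :=
  [forall q, forall r, (q != r) ==> [disjoint X q & X r]].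

Definition kmeet (X Y : kset n k) : kset n k := [ffun q => X q :&: Y q].

Definition kjoin (X Y : kset n k) : kset n k :=
  [ffun q => (X q :|: Y q) :\: \bigcup_(r | r != q) (X r :|: Y r)].

Definition ksub (X Y : kset n k) : bool := [forall q, X q \subset Y q].

Definition k_submodular (f : kset n k -> R) : Prop :=
  forall X Y, disj X -> disj Y -> f (kmeet X Y) + f (kjoin X Y) <= f X + f Y.

Definition k_monotone (f : kset n k -> R) : Prop :=
  forall X Y, disj X -> disj Y -> ksub X Y -> f X <= f Y.

Definition kempty : kset n k := [ffun _ => set0].

Definition kadd (X : kset n k) (q : 'I_k) (i : 'I_n) : kset n k :=
  [ffun r => if r == q then i |: X r else X r].

Definition rho (f : kset n k -> R) (q : 'I_k) (i : 'I_n) (X : kset n k) : R :=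
  f (kadd X q i) - f X.

(* x in the attacker's feasible set: x_q = {i | x_{q,i} = 1} *)
Definition attacker_feasible (A : 'I_k -> nat) (x : kset n k) : bool :=
  disj x && [forall q, #|x q| <= A q]%N.

Definition defender_feasible (D : 'I_k -> nat) (x S : kset n k) : bool :=
  disj S && [forall q, [disjoint S q & x q] && (#|S q| <= D q)%N].

(* Phi_D(x) = max of f over defender-feasible S (kempty is always feasible) *)
Definition PhiD (f : kset n k -> R) (D : 'I_k -> nat) (x : kset n k) : R :=
  \big[Num.max/f kempty]_(S : kset n k | defender_feasible D x S) f S.

Definition xv (x : kset n k) (q : 'I_k) (i : 'I_n) : R := (i \in x q)%:R.

(* Given the ordering s of S_q and i = i_{q,t} in s, this is S_{q,(t)}:
   components r<q are S_r, component q is {i_{q,1},..,i_{q,t-1}}, others empty. *)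
Definition Sprefix (S : kset n k) (q : 'I_k) (s : seq 'I_n) (i : 'I_n) : kset n k :=
  [ffun r : 'I_k => if (r < q)%N then S r
                    else if r == q then [set y in take (index i s) s] else set0].

End Defs.

(* Main.v *)
Require Import Defs.
From mathcomp Require Import all_boot all_order all_algebra.
From mathcomp Require Import lra.
Set Implicit Arguments. Unset Strict Implicit. Unset Printing Implicit Defensive.
Import Order.TTheory GRing.Theory Num.Theory.
Local Open Scope ring_scope.

Lemma disjP' (T:finType) (A B : {set T}) :
  reflect (forall y, y \in A -> y \in B -> False) [disjoint A & B].
Proof.
rewrite -setI_eq0; apply: (iffP eqP) => [h y ya yb | h].
- have: y \in A :&: B by rewrite inE ya yb.
  by rewrite h inE.
- apply/setP=> y; rewrite !inE; apply/negbTE/negP => /andP[]; exact: h.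
Qed.

Section S.
Variables (n k : nat).

Lemma disjE (X : kset n k) :
  disj X <-> (forall q r y, y \in X q -> y \in X r -> q = r).
Proof.
split.
- move=> /forallP h q r y hq hr; apply/eqP; apply/negP => hne.
  move: (h q) => /forallP/(_ r)/implyP/(_ (introN idP hne))/disjP'; apply; eassumption.
- move=> h; apply/forallP => q; apply/forallP => r; apply/implyP => hne.
  apply/disjP' => y hq hr; by rewrite (h q r y hq hr) eqxx in hne.
Qed.

Lemma ksubE (X Y : kset n k) : ksub X Y <-> (forall q y, y \in X q -> y \in Y q).
Proof.
split.
- by move=> /forallP h q y; move: (h q) => /subsetP; apply.
- by move=> h; apply/forallP => q; apply/subsetP => y; apply: h.
Qed.

Lemma kjoin_disj (X Y : kset n k) :
  disj [ffun r => X r :|: Y r] -> kjoin X Y = [ffun r => X r :|: Y r].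
Proof.
move/disjE => h; apply/ffunP => r; rewrite !ffunE; apply/setP => y.
rewrite in_setD; case hy: (y \in X r :|: Y r); rewrite ?andbF ?andbT //.
apply/negP => /bigcupP [s hs ys].
have := h s r y; rewrite !ffunE => /(_ ys hy) e; by rewrite e eqxx in hs.
Qed.

Variable (R : realFieldType) (f : kset n k -> R).

Lemma DR (hsub : k_submodular f) (X Y : kset n k) q i :
  disj X -> disj Y -> ksub X Y -> (forall r, i \notin Y r) ->
  rho f q i Y <= rho f q i X.
Proof.
move=> dX dY /ksubE sXY ni.
have dY' : disj (kadd Y q i).
  apply/disjE => r s y; rewrite !ffunE.
  case: (eqVneq r q) => [->|hrq]; case: (eqVneq s q) => [->|hsq] //.
  + rewrite in_setU1 => /predU1P [->|yq] ys; first by rewrite (negbTE (ni s)) in ys.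
    by move/disjE: dY => /(_ q s y yq ys).
  + move=> yr; rewrite in_setU1 => /predU1P [e|ys]; first by subst; rewrite (negbTE (ni r)) in yr.
    by move/disjE: dY => /(_ r q y yr ys).
  + by move/disjE: dY; apply.
have dX' : disj (kadd X q i).
  apply/disjE => r s y; rewrite !ffunE.
  case: (eqVneq r q) => [->|hrq]; case: (eqVneq s q) => [->|hsq] //.
  + rewrite in_setU1 => /predU1P [->|yq] ys; first by have := ni s; rewrite (sXY _ _ ys).
    by move/disjE: dX => /(_ q s y yq ys).
  + move=> yr; rewrite in_setU1 => /predU1P [e|ys]; first by subst; have := ni r; rewrite (sXY _ _ yr).
    by move/disjE: dX => /(_ r q y yr ys).
  + by move/disjE: dX; apply.
have eU : [ffun r => kadd X q i r :|: Y r] = kadd Y q i.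
  apply/ffunP => r; rewrite !ffunE; apply/setP => y.
  case: (eqVneq r q) => [->|_]; rewrite !inE.
  + case: (eqVneq y i) => //= _; apply/idP/idP => [/orP[/sXY|]|->] //; by rewrite orbT.
  + apply/idP/idP => [/orP[/sXY|]|->] //; by rewrite orbT.
have eM : kmeet (kadd X q i) Y = X.
  apply/ffunP => r; rewrite !ffunE; apply/setP => y.
  case: (eqVneq r q) => [->|_]; rewrite !inE.
  + case: (eqVneq y i) => [->|_] /=; last first.
      by apply/andP/idP => [[]|h] //; rewrite (sXY _ _ h).
    rewrite (negbTE (ni q)); apply/esym/negP => h; have := ni q; by rewrite (sXY _ _ h).
  + by apply/andP/idP => [[]|h] //; rewrite (sXY _ _ h).
have := hsub (kadd X q i) Y dX' dY.
rewrite kjoin_disj eU ?eM //.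
rewrite /rho => h; lra.
Qed.


Lemma disj_kadd (B : kset n k) q a :
  disj B -> (forall r, a \notin B r) -> disj (kadd B q a).
Proof.
move=> dY ni.
  apply/disjE => r s y; rewrite !ffunE.
  case: (eqVneq r q) => [->|hrq]; case: (eqVneq s q) => [->|hsq] //.
  + rewrite in_setU1 => /predU1P [->|yq] ys; first by rewrite (negbTE (ni s)) in ys.
    by move/disjE: dY => /(_ q s y yq ys).
  + move=> yr; rewrite in_setU1 => /predU1P [e|ys]; first by subst; rewrite (negbTE (ni r)) in yr.
    by move/disjE: dY => /(_ r q y yr ys).
  + by move/disjE: dY; apply.
Qed.

Definition kput (B : kset n k) q (T : {set 'I_n}) : kset n k :=
  [ffun r => if r == q then B q :|: T else B r].

Lemma kput0 B q T : T = set0 -> kput B q T = B.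
Proof. move=> ->; apply/ffunP => r; rewrite !ffunE; case: ifP => // /eqP e; by rewrite e setU0. Qed.

Lemma kputU B q a T : kput B q (a |: T) = kput (kadd B q a) q T.
Proof. apply/ffunP => r; rewrite !ffunE; case: ifP => // _; by rewrite eqxx setUA [a |: _]setUC. Qed.

Lemma inner (hsub : k_submodular f) q (C : {set 'I_n}) s : forall B B',
  uniq s -> disj B -> disj B' -> ksub B' B -> (forall i r, i \in s -> i \notin B r) ->
  f (kput B q [set i in s]) - f (kput B' q [set i in s | i \notin C])
  <= f B - f B' + \sum_(i <- s) rho f q i (kput B q [set y in take (index i s) s]) * (i \in C)%:R.
Proof.
elim: s => [|a s IH] B B' us dB dB' sB nB.
  rewrite big_nil addr0 !kput0 //; apply/setP => y; by rewrite !inE.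
have naB : forall r, a \notin B r by move=> r; apply: nB; rewrite inE eqxx.
move: us => /= /andP [nas us].
have e1 : [set i in a :: s] = a |: [set i in s] by apply/setP => y; rewrite !inE.
rewrite e1 kputU big_cons /= eqxx take0.
have -> : [set y in [::]] = set0 :> {set 'I_n} by apply/setP => y; rewrite !inE.
have -> : kput B q set0 = B by apply: kput0.
rewrite big_seq (eq_bigr (fun i => rho f q i (kput (kadd B q a) q [set y in take (index i s) s]) * (i \in C)%:R)); last first.
  move=> i hi; have hai : (a == i) = false by apply/negbTE; apply/eqP => e; subst; rewrite hi in nas.
  rewrite hai /=.
  have -> : [set y in a :: take (index i s) s] = a |: [set y in take (index i s) s] by apply/setP => y; rewrite !inE.
  by rewrite kputU.
rewrite -big_seq.
have dB1 : disj (kadd B q a) by apply: disj_kadd.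
have nB1 : forall i r, i \in s -> i \notin kadd B q a r.
  move=> i r hi; rewrite ffunE; case: eqP => _; last by apply: nB; rewrite inE hi orbT.
  rewrite in_setU1 negb_or (nB i r) ?inE ?hi ?orbT // andbT.
  by apply/eqP => e; subst; rewrite hi in nas.
case aC: (a \in C).
- have e2 : [set i in a :: s | i \notin C] = [set i in s | i \notin C].
    by apply/setP => y; rewrite !inE; case: eqP => [->|_] /=; rewrite ?aC ?andbF ?in_setU1 ?inE //.
  rewrite e2.
  have sB1 : ksub B' (kadd B q a).
    apply/ksubE => r y h; have h' := (ksubE _ _).1 sB r y h.
    rewrite ffunE; case: ifP => _ //; by rewrite in_setU1 h' orbT.
  have := IH (kadd B q a) B' us dB1 dB' sB1 nB1.
  rewrite /rho mulr1 => h; apply: (le_trans h); lra.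
- have e2 : [set i in a :: s | i \notin C] = a |: [set i in s | i \notin C].
    by apply/setP => y; rewrite !inE; case: eqP => [->|_] /=; rewrite ?aC ?andbF ?in_setU1 ?inE //.
  rewrite e2 kputU mulr0 add0r.
  have naB' : forall r, a \notin B' r.
    by move=> r; apply/negP => /((ksubE _ _).1 sB r); rewrite (negbTE (naB r)).
  have dB1' : disj (kadd B' q a) by apply: disj_kadd.
  have sB1 : ksub (kadd B' q a) (kadd B q a).
    apply/ksubE => r y; rewrite !ffunE; case: eqP => _; rewrite ?inE;
      last exact: (ksubE _ _).1 sB r y.
    by case/orP => [->//|/((ksubE _ _).1 sB r) ->]; rewrite orbT.
  have := IH (kadd B q a) (kadd B' q a) us dB1 dB1' sB1 nB1.
  have := @DR hsub B' B q a dB' dB sB naB; rewrite /rho => h1 h2.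
  apply: (le_trans h2); lra.
Qed.

End S.

Lemma disj_sub n k (X Y : kset n k) :
  disj Y -> (forall r y, y \in X r -> y \in Y r) -> disj X.
Proof. move=> /disjE dY h; apply/disjE => q r y /h hq /h hr; exact: dY hq hr. Qed.

Theorem theorem2 (R : realFieldType) (n k : nat) (hn : (0 < n)%N) (hk : (0 < k)%N)
  (f : kset n k -> R) (A D : 'I_k -> nat)
  (hmono : k_monotone f) (hsub : k_submodular f)
  (xhat Shat : kset n k) (hxhat : attacker_feasible A xhat)
  (hSfeas : defender_feasible D xhat Shat)
  (hSopt : forall S, defender_feasible D xhat S -> f S <= f Shat)
  (ord : 'I_k -> seq 'I_n)
  (hord_uniq : forall q, uniq (ord q))
  (hord_set : forall q, [set i in ord q] = Shat q) :
  forall x : kset n k, attacker_feasible A x ->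
    PhiD f D xhat
      - \sum_(q < k) \sum_(i <- ord q)
          rho f q i (Sprefix Shat q (ord q) i) * xv R x q i
    <= PhiD f D x
  /\
    PhiD f D xhat - \sum_(q < k) \sum_(i in Shat q) rho f q i (kempty n k) * xv R x q i
    <= PhiD f D xhat
      - \sum_(q < k) \sum_(i <- ord q)
          rho f q i (Sprefix Shat q (ord q) i) * xv R x q i.
Proof.
move=> x hx.
have hS : forall q i, (i \in Shat q) = (i \in ord q) by move=> q i; rewrite -hord_set inE.
move: (hSfeas) => /andP [dS /forallP hSq].
have dSE := (disjE Shat).1 dS.
have dPre : forall q i, disj (Sprefix Shat q (ord q) i).
  move=> q i; apply: (disj_sub dS) => r y; rewrite ffunE.
  case: ifP => // _; case: ifP => [/eqP ->|_]; last by rewrite inE.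
  by rewrite inE hS => /mem_take.
have nPre : forall q i r, i \in ord q -> i \notin Sprefix Shat q (ord q) i r.
  move=> q i r hi; rewrite ffunE; case: ifP => hr.
    apply/negP => hir; have := dSE r q i hir; rewrite hS => /(_ hi) e.
    by rewrite e ltnn in hr.
  case: ifP => _; last by rewrite inE.
  by rewrite inE; apply/negP => /index_ltn; rewrite ltnn.
split; last first.
  rewrite lerD2l lerN2; apply: ler_sum => q _.
  rewrite [X in _ <= X](eq_bigl (fun i => i \in ord q)); last by move=> i; rewrite hS.
  rewrite -big_uniq //= big_seq [X in _ <= X]big_seq.
  apply: ler_sum => i hi; apply: ler_wpM2r; first by rewrite /xv ler0n.
  apply: DR => //; first by apply/disjE => r s y; rewrite ffunE inE.
  by apply/ksubE => r y; rewrite ffunE inE.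
  by move=> r; apply: nPre.
pose P m := [ffun r : 'I_k => if (r < m)%N then Shat r else set0].
pose P' m := [ffun r : 'I_k => if (r < m)%N then Shat r :\: x r else set0].
have outer : forall m, (m <= k)%N -> f (P m) - f (P' m) <=
   \sum_(q < k | (q < m)%N) \sum_(i <- ord q) rho f q i (Sprefix Shat q (ord q) i) * xv R x q i.
  elim => [|m IH] hm.
    rewrite big_pred0 //.
    have -> : P 0%N = P' 0%N by apply/ffunP => r; rewrite !ffunE.
    by rewrite subrr.
  have hmk : (m < k)%N by [].
  pose q := Ordinal hmk.
  rewrite (bigD1 q) //=.
  rewrite (eq_bigl (fun q0 : 'I_k => (q0 < m)%N)); last first.
    move=> q0; rewrite ltnS leq_eqVlt -(inj_eq val_inj) /=.
    by case: (ltngtP q0 m).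
  have eP : P m.+1 = kput (P m) q [set i in ord q].
    apply/ffunP => r; rewrite !ffunE ltnS leq_eqVlt -(inj_eq val_inj) /=.
    case: (ltngtP r m) => hr //=.
    have -> : r = q by apply: val_inj.
    by rewrite ltnn set0U hord_set.
  have eP' : P' m.+1 = kput (P' m) q [set i in ord q | i \notin x q].
    apply/ffunP => r; rewrite !ffunE ltnS leq_eqVlt -(inj_eq val_inj) /=.
    case: (ltngtP r m) => hr //=.
    have -> : r = q by apply: val_inj.
    rewrite ltnn set0U -hord_set; apply/setP => y; rewrite !inE; by rewrite andbC.
  have ePre : forall i, Sprefix Shat q (ord q) i = kput (P m) q [set y in take (index i (ord q)) (ord q)].
    move=> i; apply/ffunP => r; rewrite !ffunE -(inj_eq val_inj) /=.
    case: (ltngtP r m) => hr //=.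
    by rewrite ltnn set0U.
  have dP : disj (P m).
    apply: (disj_sub dS) => r y; rewrite ffunE; case: ifP => //; by rewrite inE.
  have dP' : disj (P' m).
    apply: (disj_sub dS) => r y; rewrite ffunE; case: ifP => _; rewrite !inE //.
    by case/andP.
  have sP : ksub (P' m) (P m).
    apply/ksubE => r y; rewrite !ffunE; case: ifP => _ //; rewrite inE; by case/andP.
  have nP : forall i r, i \in ord q -> i \notin P m r.
    move=> i r hi; rewrite ffunE; case: ifP => hr; last by rewrite inE.
    apply/negP => hir; have := dSE r q i hir; rewrite hS => /(_ hi) e.
    by rewrite e /= ltnn in hr.
  have := inner hsub q (x q) (hord_uniq q) dP dP' sP nP.
  rewrite -eP -eP' => h; apply: (le_trans h).
  rewrite addrC lerD //.
    move: (IH (ltnW hm)); by [].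
  rewrite le_eqVlt; apply/orP; left; apply/eqP; rewrite big_seq [RHS]big_seq; apply: eq_bigr => i _; by rewrite ePre.
have := outer k (leqnn k).
rewrite (eq_bigl xpredT); last by move=> q; rewrite ltn_ord.
have -> : P k = Shat by apply/ffunP => r; rewrite ffunE ltn_ord.
set S' := P' k => hmain.
have fS' : defender_feasible D x S'.
  apply/andP; split.
    apply: (disj_sub dS) => r y; rewrite ffunE ltn_ord inE; by case/andP.
  apply/forallP => q; apply/andP; split.
    apply/disjP' => y; rewrite ffunE ltn_ord inE => /andP [/negP h _]; exact: h.
  apply: leq_trans (subset_leq_card _) (_ : (#|Shat q| <= D q)%N).
    by rewrite ffunE ltn_ord subsetDl.
  by case/andP: (hSq q).
have h1 : f S' <= PhiD f D x by apply: le_bigmax_cond.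
have h2 : PhiD f D xhat <= f Shat.
  apply: bigmax_le => //; apply: hSopt; apply/andP; split.
    by apply/disjE => r s y; rewrite ffunE inE.
  apply/forallP => q; rewrite ffunE cards0 andbT.
  by apply/disjP' => y; rewrite inE.
lra.
Qed.
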